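(* Fix a total number $N_{\text{total}} > 0$ of collected data samples, split into $N_{\text{total}}/E_L$ episodes each of fixed length $E_L \in \{1,2,\dots\}$. Let $P_s(l)$ be the probability that the state at interaction step $l$ of an episode is secure (independent of $E_L$), let $N_s(E_L) = \frac{N_{\text{total}}}{E_L}\sum_{l=1}^{E_L} P_s(l)$ be the expected number of secure state visits over all episodes, $N_d(E_L) = N_{\text{total}} - N_s(E_L)$ the expected number of dead-end state visits, and $P_d(E_L) = N_d(E_L)/N_{\text{total}}$ the probability of visiting dead-end states. Then reducing $E_L$ causes $P_d$ to decrease or remain unchanged: $P_d(E_L) \le P_d(E_L+1)$ for every $E_L \ge 1$.
   Context: A dead-end state is a state from which, once reached at some step of a trajectory, no policy can lead to the goal state at any later step; a secure state is a state that is not a dead-end state. The dead-end set is absorbing along trajectories, so that $P_s(l) = \prod_{k=1}^{l}(1-P_d(k))$ with per-step dead-end probabilities $P_d(k)\in[0,1]$; in particular $P_s$ is non-increasing in $l$. *)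

(* Defs.v *)
From mathcomp Require Import all_boot all_order all_algebra.
Set Implicit Arguments. Unset Strict Implicit. Unset Printing Implicit Defensive.
Import Order.TTheory GRing.Theory Num.Theory.
Local Open Scope ring_scope.

(* Per-step dead-end probabilities pd : nat -> R (step k >= 1).
   Probability that the state at step l of an episode is secure:
   P_s(l) = prod_{k=1}^{l} (1 - P_d(k)). *)
Definition Ps {R : realFieldType} (pd : nat -> R) (l : nat) : R :=
  \prod_(1 <= k < l.+1) (1 - pd k).

Definition Ns {R : realFieldType} (Ntotal : R) (pd : nat -> R) (EL : nat) : R :=
  Ntotal / EL%:R * \sum_(1 <= l < EL.+1) Ps pd l.

Definition Nd {R : realFieldType} (Ntotal : R) (pd : nat -> R) (EL : nat) : R :=
  Ntotal - Ns Ntotal pd EL.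

Definition Pd_visit {R : realFieldType} (Ntotal : R) (pd : nat -> R) (EL : nat) : R :=
  Nd Ntotal pd EL / Ntotal.

(* Main.v *)
Require Import Defs.
From mathcomp Require Import all_boot all_order all_algebra.
From mathcomp Require Import ring.
Import Order.TTheory GRing.Theory Num.Theory.
Local Open Scope ring_scope.

Lemma PsS (R : realFieldType) (pd : nat -> R) l : Ps pd l.+1 = Ps pd l * (1 - pd l.+1).
Proof. by rewrite /Ps big_nat_recr. Qed.

Lemma Ps_ge0 (R : realFieldType) (pd : nat -> R) (hpd : forall k : nat, 0 <= pd k <= 1) l :
  0 <= Ps pd l.
Proof.
rewrite /Ps; apply: prodr_ge0 => k _; have /andP[_ h] := hpd k; by rewrite subr_ge0.
Qed.

Lemma Ps_anti (R : realFieldType) (pd : nat -> R) (hpd : forall k : nat, 0 <= pd k <= 1) l m :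
  (l <= m)%N -> Ps pd m <= Ps pd l.
Proof.
elim: m => [|m IH]; first by rewrite leqn0 => /eqP ->.
rewrite leq_eqVlt => /orP[/eqP -> //|]; rewrite ltnS => hl.
apply: le_trans (IH hl); rewrite PsS.
have /andP[h0 h1] := hpd m.+1.
rewrite -[leRHS]mulr1 ler_wpM2l ?Ps_ge0 //.
by rewrite lerBlDr lerDl.
Qed.

Theorem corollary1 (R : realFieldType) (Ntotal : R) (pd : nat -> R)
  (hN : 0 < Ntotal) (hpd : forall k : nat, 0 <= pd k <= 1)
  (EL : nat) (hEL : (1 <= EL)%N) :
  Pd_visit Ntotal pd EL <= Pd_visit Ntotal pd EL.+1.
Proof.
set S := \sum_(1 <= l < EL.+1) Ps pd l.
set p := Ps pd EL.+1.
have hS : EL%:R * p <= S.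
  have -> : EL%:R * p = \sum_(1 <= l < EL.+1) p.
    by rewrite sumr_const_nat subn1 /= mulr_natl.
  apply: ler_sum_nat => i /andP[_ hi]; by apply: Ps_anti => //; apply: ltnW.
have hN0 : Ntotal != 0 by rewrite gt_eqF.
have hn : 0 < EL%:R :> R by rewrite ltr0n.
have hn1 : 0 < EL.+1%:R :> R by rewrite ltr0n.
rewrite /Pd_visit /Nd /Ns.
rewrite -/S (big_nat_recr (EL.+1)) //= -/S -/p.
rewrite !mulrBl !divff // lerD2l lerN2.

have E : forall (x y : R), x != 0 -> Ntotal / x * y / Ntotal = y / x.
  by move=> x y hx; field; rewrite hN0 hx.
rewrite !E ?gt_eqF //.
rewrite ler_pdivrMr // mulrAC ler_pdivlMr //.
rewrite mulrDl mulrSr mulrDr mulr1 lerD2l mulrC //.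
Qed.
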